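(* For the coprime hider strategy $y$ and every $v\in V\setminus\{1\}$, $y(C(T_v))\le h/w$.
   Context: $G$ is the path graph with $V=\{0,\dots,n-1\}$ and edges $\{v,v+1\}$; $k\ge2$, $n>2^k$, $c=2^k-2$ with $\gcd(c,n-1)=1$; $h,w$ are the positive integers with $h(n-1)-wc=1$ and $w\in\{1,\dots,n-2\}$ minimal. A search strategy for a tree $H$ is a rooted binary tree defined recursively: a single node is a search strategy for any $H$; otherwise the root is labeled with an edge $uv$ of $H$ and its two child subtrees are search strategies for the components $H_u,H_v$ of $H-uv$ containing $u,v$. Nodes get vertex sets: the root gets $V(H)$, the children of a root labeled $uv$ get $V(H_u),V(H_v)$, recursively. $C(T)$ is the set of $v$ with $V(\lambda)=\{v\}$ for a leaf $\lambda$; $\mathcal{T}_k$ is the set of search strategies of height at most $k$. $[u\oplus\ell]=\{w\bmod n: u\le w\le u+\ell-1\}$, $[a,b]=\{a,\dots,b\}$. For $v\in V\setminus\{1\}$, $T_v\in\mathcal{T}_k$ is any strategy with $C(T_v)=[v\oplus(c+1)]$ if this interval meets $\{0,n-1\}$ and $C(T_v)=[v\oplus c]$ otherwise. $y(S)=\sum_{i\in S}y_i$. Coprime hider strategy: $g(v)=v\frac{h}{wc}$, $r=\lfloor c/h\rfloor$; $y_0=y_{n-1}=0$; starting at $v=1$, repeatedly choose the largest $r^*\in\{r,r+1\}$ with $g(v+r^*-1)\le y([1,v-1])+\frac1w$, set $y_i=\frac{1}{r^*w}$ for $i\in\{v,\dots,v+r^*-1\}$, replace $v$ by $v+r^*$;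 stop when $v>n-2$. *)

(* Defs.v *)
From mathcomp Require Import all_boot all_order all_algebra.
Set Implicit Arguments. Unset Strict Implicit. Unset Printing Implicit Defensive.
Import Order.TTheory GRing.Theory Num.Theory.
Local Open Scope ring_scope.

(* Path graph on V = {0,...,n-1}; everything is over nat indices, weights in rat. *)

Definition cc (k : nat) : nat := (2 ^ k - 2)%N.

Definition in_cint (n u l i : nat) : bool :=
  has (fun j => (j %% n)%N == i) (iota u l).

Definition ysum (n : nat) (y : nat -> rat) (S : nat -> bool) : rat :=
  \sum_(i < n | S i) y i.

Definition CTv (n k v : nat) : nat -> bool :=
  if in_cint n v (cc k).+1 0 || in_cint n v (cc k).+1 n.-1
  then in_cint n v (cc k).+1
  else in_cint n v (cc k).

Definition gfun (k h w : nat) (v : nat) : rat :=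
  (v%:R * h%:R) / (w%:R * (cc k)%:R).

Definition rr (k h : nat) : nat := (cc k %/ h)%N.

(* One run of the greedy block-assignment loop, with fuel.
   State: current vertex v and the partial assignment y (0 where unassigned).
   r* = r+1 if g(v + (r+1) - 1) <= y([1,v-1]) + 1/w, otherwise r. *)
Fixpoint hider_aux (n k h w : nat) (fuel v : nat) (y : nat -> rat) : nat -> rat :=
  match fuel with
  | O => y
  | S f =>
    if (n - 2 < v)%N then y else
    let s := \sum_(1 <= i < v) y i in
    let r := rr k h in
    let rs := if gfun k h w (v + r) <= s + 1 / w%:R then r.+1 else r in
    let y' := fun i => if (v <= i < v + rs)%N then 1 / (rs%:R * w%:R) else y i in
    hider_aux n k h w f (v + rs) y'
  end.

Definition hider (n k h w : nat) (i : nat) : rat :=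
  if (i == 0)%N || (i == n.-1) then 0
  else hider_aux n k h w n 1 (fun _ => 0) i.

(* Main.v *)
Require Import Defs.
From mathcomp Require Import all_boot all_order all_algebra.
From mathcomp Require Import zify ring lra.
From Stdlib Require Import FunctionalExtensionality.
Import Order.TTheory GRing.Theory Num.Theory.
Set Implicit Arguments. Unset Strict Implicit. Unset Printing Implicit Defensive.

Lemma div_unique a d q : q * d <= a < q.+1 * d -> a %/ d = q.
Proof.
case/andP=> H1 H2; have dp : 0 < d by case: d H2 {H1} => //; rewrite !muln0.
apply/eqP; rewrite eqn_leq leq_divRL // H1 andbT -ltnS ltn_divLR //.
Qed.

Definition pp (c h m : nat) := (m * c) %/ h.
Definition MM (c h x : nat) := (x.+1 * h).-1 %/ c.
Definition ss (c h m : nat) := (pp c h m.+1 - pp c h m)%N.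

Section Arith.
Variables c h : nat.
Hypothesis hp : 0 < h.
Hypothesis hc : h <= c.

Lemma pp_le m x : (pp c h m <= x) = (m * c < x.+1 * h).
Proof. by rewrite /pp -ltnS ltn_divLR. Qed.

Lemma pp_gt m x : (x < pp c h m) = (x.+1 * h <= m * c).
Proof. by rewrite /pp leq_divRL. Qed.

Lemma pp_add a b : pp c h a + pp c h b <= pp c h (a + b) <= pp c h a + pp c h b + 1.
Proof.
rewrite /pp mulnDl divnD //.
case: (leqP h _) => _; by rewrite ?addn0 ?addn1 ?leqnn ?leqnSn.
Qed.

Lemma pp_per m : pp c h (m + h) = pp c h m + c.
Proof. by rewrite /pp mulnDl [h * c]mulnC divnDMl. Qed.

Lemma pp1 : 1 <= pp c h 1.
Proof. by rewrite /pp mul1n leq_divRL // mul1n. Qed.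

Lemma ss_pos m : 0 < ss c h m.
Proof.
rewrite /ss subn_gt0; have := pp_add m 1; have := pp1; rewrite addn1. lia.
Qed.

Lemma pp_mono a b : a <= b -> pp c h a <= pp c h b.
Proof. by move=> ab; rewrite /pp leq_div2r // leq_mul2r ab orbT. Qed.

Lemma cpos : 0 < c. Proof. exact: leq_trans hc. Qed.

Lemma MM_spec x : pp c h (MM c h x) <= x < pp c h (MM c h x).+1.
Proof.
have cp := cpos.
have hx : 0 < x.+1 * h by rewrite muln_gt0.
rewrite pp_le pp_gt /MM; apply/andP; split.
  apply: leq_ltn_trans (leq_divM _ _) _; lia.
have := ltn_ceil (x.+1 * h).-1 cp. by rewrite prednK.
Qed.

Lemma MM_uniq x m : pp c h m <= x < pp c h m.+1 -> MM c h x = m.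
Proof.
rewrite pp_le pp_gt => /andP[H1 H2]; rewrite /MM; apply: div_unique.
have hx : 0 < x.+1 * h by rewrite muln_gt0.
apply/andP; split; first by rewrite -ltnS prednK.
by rewrite prednK.
Qed.
End Arith.

Local Open Scope ring_scope.

Definition ee (c h i : nat) : rat := 1 / (ss c h (MM c h i))%:R.
Definition Phi (c h x : nat) : rat := \sum_(0 <= i < x) ee c h i.

Section PhiS.
Variables c h : nat.
Hypothesis hp : (0 < h)%N.
Hypothesis hc : (h <= c)%N.

Lemma ss_neq0 m : (ss c h m)%:R != 0 :> rat.
Proof. by rewrite pnatr_eq0 -lt0n ss_pos. Qed.

Lemma Phi_formula x : Phi c h x =
  (MM c h x)%:R + (x - pp c h (MM c h x))%:R / (ss c h (MM c h x))%:R.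
Proof.
elim: x => [|x IH].
  rewrite /Phi big_geq // (@MM_uniq c h hp 0 0) /=; last first.
    by rewrite /pp mul0n div0n leqnn /= (pp1 hp hc).
  by rewrite /pp mul0n div0n sub0n mul0r addr0.
rewrite /Phi big_nat_recr //= -/(Phi c h x) IH /ee.
have [H1 H2] := andP (MM_spec hp hc x).
set m := MM c h x in H1 H2 *.
have Hs := ss_neq0 m.
case: (ltnP x.+1 (pp c h m.+1)) => H3.
  rewrite (@MM_uniq c h hp x.+1 m); last by rewrite H3 andbT; lia.
  rewrite -addrA; congr (_ + _).
  rewrite subSn // -addn1 natrD. field. done.
have E : x.+1 = pp c h m.+1 by apply/eqP; rewrite eqn_leq H3 H2.
rewrite (@MM_uniq c h hp x.+1 m.+1); last first.
  rewrite -E leqnn /=. have := ss_pos hp hc m.+1. rewrite /ss. lia.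
rewrite E subnn mul0r addr0 -addn1 natrD -addrA; congr (_ + _).
rewrite /ss -E in Hs *.
have -> : (x.+1 - pp c h m = (x - pp c h m) + 1)%N by lia.
by rewrite natrD -mulrDl divff // paddr_eq0 ?ler0n ?ler01 // oner_eq0 andbF /=.
Qed.

Lemma Phi_seg m x : (pp c h m <= x <= pp c h m.+1)%N ->
  Phi c h x = m%:R + (x - pp c h m)%:R / (ss c h m)%:R.
Proof.
case/andP=> H1 H2; rewrite Phi_formula.
case: (ltnP x (pp c h m.+1)) => H3.
  by rewrite (@MM_uniq c h hp x m) // H1 H3.
have E : x = pp c h m.+1 by apply/eqP; rewrite eqn_leq H3 H2.
rewrite (@MM_uniq c h hp x m.+1); last first.
  rewrite E leqnn /=. have := ss_pos hp hc m.+1. rewrite /ss. lia.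
rewrite E subnn mul0r addr0 -/(ss c h m) divff ?ss_neq0 //.
by rewrite -addn1 natrD.
Qed.

Lemma Phi_pp m : Phi c h (pp c h m) = m%:R.
Proof.
rewrite (@Phi_seg m) ?subnn ?mul0r ?addr0 // leqnn /=.
by apply: pp_mono; rewrite // leqnSn.
Qed.

Lemma ee_ge0 i : 0 <= ee c h i.
Proof. by rewrite /ee divr_ge0 // ler0n. Qed.

Lemma Phi_mono x y : (x <= y)%N -> Phi c h x <= Phi c h y.
Proof.
move=> xy; rewrite /Phi (big_cat_nat (leq0n x) xy) /= lerDl.
by apply: sumr_ge0 => i _; apply: ee_ge0.
Qed.

Lemma Phi_per x : Phi c h (x + c) = Phi c h x + h%:R.
Proof.
have [H1 H2] := andP (MM_spec hp hc x).
set m := MM c h x in H1 H2 *.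
rewrite (@Phi_seg m x); last by rewrite H1 ltnW.
rewrite (@Phi_seg (m + h) (x + c)); last first.
  by rewrite -addSn !pp_per // leq_add2r H1 leq_add2r ltnW.
have Es : ss c h (m + h) = ss c h m by rewrite /ss -addSn !pp_per // subnDr.
rewrite Es pp_per // subnDr natrD; ring.
Qed.

Lemma frac_le (u v s S : nat) : (0 < s)%N -> (0 < S)%N -> (u * S <= v * s)%N ->
  u%:R / s%:R <= v%:R / S%:R :> rat.
Proof.
move=> sp Sp H.
rewrite ler_pdivrMr ?ltr0n // mulrAC ler_pdivlMr ?ltr0n //.
by rewrite -!natrM ler_nat.
Qed.

Lemma aux_ineq (u s S d : nat) : (u < s)%N -> (d <= 1)%N -> (S <= s + d)%N ->
  (u * S <= (u + d) * s)%N.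
Proof.
move=> us; case: d => [|[|//]] _ HS.
  apply: leq_trans (leq_mul (leqnn u) HS) _; lia.
apply: (leq_trans (leq_mul (leqnn u) HS)).
by rewrite mulnDr mulnDl mul1n muln1 leq_add2l ltnW.
Qed.

Lemma Phi_super M y : M%:R + Phi c h y <= Phi c h (pp c h M + 1 + y).
Proof.
have [H1 H2] := andP (MM_spec hp hc y).
set k := MM c h y in H1 H2 *.
have Hs := ss_pos hp hc k.
have A1 := pp_add c hp M k.
have A2 := pp_add c hp M k.+1.
have Ss := ss_pos hp hc (M + k).
rewrite addnS in A2.
rewrite (@Phi_seg k y); last by rewrite H1 ltnW.
move: Hs Ss; rewrite /ss => Hs Ss.
have Hsk := ss_neq0 k. move: Hsk; rewrite /ss => Hsk.
have Pm := Phi_mono; have Ps := @Phi_seg (M + k); have Pp := Phi_pp (M + k).+1.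
rewrite /ss in Ps.
move: A1 A2 Hs Ss H1 H2 Hsk Ps Pp.
set a := pp c h M; set b := pp c h k; set b1 := pp c h k.+1;
set e := pp c h (M + k); set e1 := pp c h (M + k).+1.
clearbody a b b1 e e1 => A1 A2 Hs Ss H1 H2 Hsk Ps Pp.
case: (ltnP (a + 1 + y) e1) => Hz.
  rewrite Ps; last by apply/andP; split; [move: A1 => /andP[? ?]; lia | apply: ltnW].
  rewrite natrD -addrA lerD2l lerD2l.
  apply: frac_le => //.
  have -> : (a + 1 + y - e = (y - b) + (a + b + 1 - e))%N.
    by move: A1 => /andP[? ?]; lia.
  apply: aux_ineq.
  - lia.
  - move: A1 => /andP[? ?]; lia.
  - move: A1 A2 => /andP[? ?] /andP[? ?]; lia.
apply: le_trans (Pm _ _ Hz); rewrite Pp -addn1 !natrD -addrA lerD2l lerD2l.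
rewrite ler_pdivrMr ?ltr0n // mul1r ler_nat.
lia.
Qed.
End PhiS.

Definition Yj (c h w j i : nat) : rat :=
  if (1 <= i <= pp c h j)%N then ee c h i.-1 / w%:R else 0.

Section Hid.
Variables n k h w : nat.
Let c := cc k.
Hypothesis hp : (0 < h)%N.
Hypothesis hc : (h <= c)%N.
Hypothesis wp : (0 < w)%N.
Hypothesis cp : (0 < c)%N.

Lemma sumYj j : \sum_(1 <= i < (pp c h j).+1) Yj c h w j i = j%:R / w%:R.
Proof.
rewrite big_add1 /=.
rewrite (@eq_big_nat _ _ _ 0 (pp c h j) _ (fun i => ee c h i / w%:R)); last first.
  by move=> i /andP[_ Hi]; rewrite /Yj /= Hi.
by rewrite -mulr_suml -/(Phi c h (pp c h j)) Phi_pp.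
Qed.

Lemma gcond v r j : (gfun k h w (v + r) <= j%:R / w%:R + 1 / w%:R) = ((v + r) * h <= j.+1 * c)%N.
Proof.
rewrite /gfun -mulrDl ler_pdivrMr; last by rewrite mulr_gt0 // ltr0n.
have -> : (j%:R + 1) / w%:R * (w%:R * (cc k)%:R) = (j.+1 * c)%:R :> rat.
  rewrite natrM -addn1 natrD /c. field. by rewrite pnatr_eq0 -lt0n.
by rewrite -natrM ler_nat.
Qed.

Lemma rs_eq j : ss c h j = if (((pp c h j).+1 + rr k h) * h <= j.+1 * c)%N then (rr k h).+1 else rr k h.
Proof.
have A := pp_add c hp j 1.
have E1 : pp c h 1 = rr k h by rewrite /pp mul1n.
rewrite E1 addn1 in A.
have := pp_gt c hp j.+1 (pp c h j + rr k h).
rewrite addSn => <-. rewrite /ss.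
case: ltnP => H; lia.
Qed.

Hypothesis pw : pp c h w = (n - 2)%N.

Lemma hider_step f j : (j < w)%N ->
  hider_aux n k h w f.+1 (pp c h j).+1 (Yj c h w j) =
  hider_aux n k h w f (pp c h j.+1).+1 (Yj c h w j.+1).
Proof.
move=> jw.
have Hlt : (pp c h j.+1 <= pp c h w)%N by apply: pp_mono.
have Hs := ss_pos hp hc j; rewrite /ss in Hs.
cbn [hider_aux].
have -> : (n - 2 < (pp c h j).+1)%N = false by apply/negbTE; lia.
rewrite sumYj gcond -rs_eq.
have -> : ((pp c h j).+1 + ss c h j = (pp c h j.+1).+1)%N by rewrite /ss; lia.
congr (hider_aux _ _ _ _ _ _ _).
apply: functional_extensionality => i; rewrite /Yj.
case: ifP => Hin.
  have Hi1 : (1 <= i <= pp c h j.+1)%N by lia.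
  rewrite Hi1 /ee (@MM_uniq c h hp i.-1 j); last by lia.
  have := ss_neq0 hp hc j => Hn.
  field; apply/andP; split => //; by rewrite pnatr_eq0 -lt0n.
move/negbT: Hin => Hin.
case: (boolP (1 <= i <= pp c h j)%N) => H1.
  by have -> : (1 <= i <= pp c h j.+1)%N by lia.
by have -> : (1 <= i <= pp c h j.+1)%N = false by apply/negbTE; lia.
Qed.

Lemma hider_run f j : (j <= w)%N -> (w - j < f)%N ->
  hider_aux n k h w f (pp c h j).+1 (Yj c h w j) = Yj c h w w.
Proof.
elim: f j => [|f IH] j jw fw; first by lia.
case: (ltnP j w) => H.
  by rewrite hider_step // IH //; lia.
have -> : j = w by lia.
cbn [hider_aux].
by have -> : (n - 2 < (pp c h w).+1)%N by lia.
Qed.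
End Hid.

Lemma in_cint_iff n u l i : (u < n)%N -> (l <= n)%N -> (i < n)%N ->
  in_cint n u l i = ((u <= i < u + l) || (u <= i + n < u + l))%N.
Proof.
move=> un ln i_n; rewrite /in_cint; apply/hasP/orP.
  case=> j; rewrite mem_iota => /andP[H1 H2] /eqP Hj.
  case: (ltnP j n) => Hjn.
    by left; rewrite -Hj modn_small // H1 H2.
  right; have E : j = ((j - n) + n)%N by rewrite subnK.
  have : (j - n < n)%N by lia.
  move=> Hl; rewrite E modnDr modn_small // in Hj.
  by rewrite -Hj -E H1 H2.
case=> /andP[H1 H2].
  by exists i; rewrite ?mem_iota ?H1 ?H2 // modn_small.
by exists (i + n); rewrite ?mem_iota ?H1 ?H2 // modnDr modn_small.
Qed.

Lemma sum_cond_true a b (P : pred nat) (f : nat -> rat) :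
  (forall i, (a <= i < b)%N -> P i) -> \sum_(a <= i < b | P i) f i = \sum_(a <= i < b) f i.
Proof. by move=> H; rewrite big_mkcond; apply: eq_big_nat => i Hi; rewrite H. Qed.

Lemma sum_cond_false a b (P : pred nat) (f : nat -> rat) :
  (forall i, (a <= i < b)%N -> ~~ P i) -> \sum_(a <= i < b | P i) f i = 0.
Proof.
move=> H; rewrite big_mkcond (@eq_big_nat _ _ _ a b _ (fun=> 0)) ?big1 // => i Hi.
by rewrite (negbTE (H i Hi)).
Qed.

Lemma sum_window (f : nat -> rat) N a b : (a <= b)%N -> (b <= N)%N ->
  \sum_(i < N | (a <= i < b)%N) f i = \sum_(0 <= i < b) f i - \sum_(0 <= i < a) f i.
Proof.
move=> ab bN; rewrite -(big_mkord (fun i => (a <= i < b)%N) f) (big_cat_nat (leq0n b) bN) /=.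
rewrite [X in _ + X](@sum_cond_false b N); last by move=> i Hi; lia.
rewrite addr0 (big_cat_nat (leq0n a) ab) /= (@sum_cond_false 0 a); last by move=> i Hi; lia.
rewrite add0r (@sum_cond_true a b); last by move=> i Hi; lia.
by rewrite (big_cat_nat (leq0n a) ab) /=; lra.
Qed.

Lemma if_or (X Y : bool) (a : rat) : ~~ (X && Y) ->
  (if X || Y then a else 0) = (if X then a else 0) + (if Y then a else 0).
Proof. by case: X; case: Y => //= _; rewrite ?addr0 ?add0r. Qed.

Lemma cint_sum (f : nat -> rat) n v L : (v < n)%N -> (L <= n)%N ->
  \sum_(i < n | ((v <= i < v + L) || (v <= i + n < v + L))%N) f i =
  if (v + L <= n)%N then \sum_(0 <= i < v + L) f i - \sum_(0 <= i < v) f i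
  else (\sum_(0 <= i < n) f i - \sum_(0 <= i < v) f i) + \sum_(0 <= i < v + L - n) f i.
Proof.
move=> vn Ln; case: ifP => H.
  rewrite -(@sum_window f n v (v + L)) //; last by lia.
  apply: eq_bigl => i; have := ltn_ord i; move: (nat_of_ord i) => j Hj.
  case: (boolP (v <= j < v + L)%N) => //= _; apply/negbTE; lia.
rewrite -(@sum_window f n v n) //; last by lia.
have Hb : (v + L - n <= n)%N by lia.
have E0 := (@sum_window f n 0 (v + L - n) (leq0n _) Hb).
rewrite [\sum_(0 <= i < 0) f i]big_geq // subr0 in E0; rewrite -E0.
rewrite big_mkcond [X in _ = X + _]big_mkcond [X in _ = _ + X]big_mkcond -big_split /=.
apply: eq_bigr => i _.
have := ltn_ord i; move: (nat_of_ord i) => j Hj.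
rewrite -if_or; last by apply/negP => /andP[]; lia.
congr (if _ then _ else _).
case: (boolP (v <= j)%N) => Hv /=.
  by apply/idP/idP => /orP; lia.
apply/idP/idP; lia.
Qed.

Lemma Phi0 c h : Phi c h 0 = 0.
Proof. by rewrite /Phi big_geq. Qed.

Lemma fin_eq (P h w : rat) : (P + h) / w - P / w = h / w.
Proof. by rewrite -mulrBl addrAC subrr add0r. Qed.

Lemma S_Phi c h w n x : pp c h w = (n - 2)%N -> (x <= n - 1)%N ->
  \sum_(0 <= i < x) Yj c h w w i = Phi c h x.-1 / w%:R.
Proof.
move=> pw; elim: x => [|x IH] xn; first by rewrite big_geq // Phi0 mul0r.
rewrite big_nat_recr //= IH; last by lia.
case: x IH xn => [|x] IH xn.
  by rewrite /= /Yj /= Phi0 !mul0r addr0.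
rewrite /= /Yj.
have -> : (0 < x.+1 <= pp c h w)%N by lia.
by rewrite /Phi big_nat_recr //= mulrDl.
Qed.

Unset Implicit Arguments.

Theorem lemma3p8 (k n h w : nat) :
  (2 <= k)%N -> (2 ^ k < n)%N -> coprime (cc k) (n - 1) ->
  (0 < h)%N -> (0 < w)%N -> (h * (n - 1) = w * cc k + 1)%N ->
  (w <= n - 2)%N ->
  (forall h' w' : nat, (0 < h')%N -> (0 < w')%N -> (w' < w)%N ->
      (h' * (n - 1) <> w' * cc k + 1)%N) ->
  forall v : nat, (v < n)%N -> v <> 1%N ->
    ysum n (hider n k h w) (CTv n k v) <= h%:R / w%:R.
Proof.
move=> k2 kn _ hp wp hw wn _ v vn v1.
have k4 : (2 ^ 2 <= 2 ^ k)%N by rewrite leq_exp2l.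
have c2 : (2 <= cc k)%N by rewrite /cc; lia.
have cn : (cc k + 3 <= n)%N by rewrite /cc; lia.
move: c2 cn hw; set c := cc k => c2 cn hw.
have hc : (h < c)%N.
  rewrite ltnNge; apply/negP => ch.
  have : (c * (n - 1) <= h * (n - 1))%N by rewrite leq_mul2r ch orbT.
  have : (w * c <= (n - 2) * c)%N by rewrite leq_mul2r wn orbT.
  nia.
have hw2 : (h <= w)%N by nia.
have pw : pp c h w = (n - 2)%N.
  rewrite /pp; apply: div_unique; nia.
have pwh : pp c h (w - h) = (n - 2 - c)%N.
  rewrite /pp; apply: div_unique; nia.
have hc' : (h <= c)%N by apply: ltnW.
have cp : (0 < c)%N by lia.
have Hfun : hider n k h w = Yj c h w w.
  apply: functional_extensionality => i.
  have Y0 : (fun _ : nat => 0 : rat) = Yj c h w 0.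
    apply: functional_extensionality => j; rewrite /Yj /pp mul0n div0n.
    by case: j.
  have p0 : (pp c h 0).+1 = 1%N by rewrite /pp mul0n div0n.
  rewrite /hider Y0 -p0 (@hider_run n k h w hp hc' wp cp pw n 0) //; last by lia.
  case: ifP => // /orP [/eqP -> | /eqP ->]; rewrite /Yj //.
  by rewrite pw; have -> : (0 < n.-1 <= n - 2)%N = false by apply/negbTE; lia.
have SP x : (x <= n - 1)%N -> \sum_(0 <= i < x) Yj c h w w i = Phi c h x.-1 / w%:R.
  by move=> xn; apply: (@S_Phi c h w n).
have Sn : \sum_(0 <= i < n) Yj c h w w i = Phi c h (n - 2) / w%:R.
  have En : n = (n - 1).+1 by lia.
  rewrite {1}En big_nat_recr //= SP //.
  rewrite /Yj; have -> : (0 < n - 1 <= pp c h w)%N = false by apply/negbTE; lia.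
  by rewrite addr0; congr (Phi _ _ _ / _); lia.
rewrite /ysum Hfun /CTv -/c.
have Phic x : Phi c h (x + c) = Phi c h x + h%:R := Phi_per hp hc' x.
have Pw : Phi c h (n - 2) = w%:R by rewrite -pw Phi_pp.
have C0 : in_cint n v c.+1 0 = ((v <= 0 < v + c.+1) || (v <= 0 + n < v + c.+1))%N.
  by apply: in_cint_iff; lia.
have C1 : in_cint n v c.+1 n.-1 = ((v <= n.-1 < v + c.+1) || (v <= n.-1 + n < v + c.+1))%N.
  by apply: in_cint_iff; lia.
rewrite C0 C1.
case: ifP => cond.
  rewrite (eq_bigl (fun i : 'I_n => ((v <= i < v + c.+1) || (v <= i + n < v + c.+1))%N)); last first.
    by move=> i; apply: in_cint_iff; [lia | lia | exact: ltn_ord].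
  rewrite cint_sum //; last by lia.
  case: ifP => H.
    case: (v =P 0) => [v0 | v0].
      rewrite !SP; try lia.
      rewrite v0 (_ : (0 + c.+1).-1 = (0 + c)%N); last by lia.
      by rewrite Phic fin_eq.
    rewrite (_ : (v + c.+1)%N = n); last by lia.
    rewrite Sn SP; last by lia.
    rewrite (_ : (n - 2)%N = (v.-1 + c)%N); last by lia.
    by rewrite Phic fin_eq.
  rewrite Sn !SP; try lia.
  have Hsup := Phi_super hp hc' (w - h) (v + c.+1 - n).-1.
  rewrite pwh (_ : (n - 2 - c + 1 + (v + c.+1 - n).-1)%N = v.-1) in Hsup; last by lia.
  rewrite natrB // in Hsup.
  rewrite Pw -mulrBl -mulrDl ler_pM2r ?invr_gt0 ?ltr0n //; lra.
rewrite (eq_bigl (fun i : 'I_n => ((v <= i < v + c) || (v <= i + n < v + c))%N)); last first.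
  by move=> i; apply: in_cint_iff; [lia | lia | exact: ltn_ord].
rewrite cint_sum //; last by lia.
case: ifP => H; last by lia.
rewrite !SP; try lia.
rewrite (_ : (v + c).-1 = (v.-1 + c)%N); last by lia.
by rewrite Phic fin_eq.
Qed.
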